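(* Let $f\colon X\to Y$ be a function of metric spaces and $A,B\subset X$. Suppose all $(r^A_X,r^A_Y)$-components of $A$ are $(R^A_X,R^A_Y)$-bounded and all $(r^B_X,r^B_Y)$-components of $B$ are $(R^B_X,R^B_Y)$-bounded. If $R^B_X+2r^B_X<r^A_X$ and $R^B_Y+2r^B_Y<r^A_Y$, then all $(r^B_X,r^B_Y)$-components of $A\cup B$ are $(R^A_X+2r^A_X,\,R^A_Y+2r^A_Y)$-bounded.
   Context: For $f\colon X\to Y$ and positive numbers $r_X,r_Y$: a set $C\subset X$ is $(r_X,r_Y)$-bounded if $d_X(x,x')\le r_X$ and $d_Y(f(x),f(x'))\le r_Y$ for all $x,x'\in C$. An $(r_X,r_Y)$-chain in $C$ is a sequence $x_1,\dots,x_j$ of points of $C$ such that each pair $\{x_i,x_{i+1}\}$ is $(r_X,r_Y)$-bounded. The $(r_X,r_Y)$-components of $C$ are the maximal subsets of $C$ any two points of which are joined by an $(r_X,r_Y)$-chain in $C$. *)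

(* Defs.v *)
From Stdlib Require Import Reals List.
Open Scope R_scope.

Definition is_metric {T : Type} (d : T -> T -> R) : Prop :=
  (forall x y, 0 <= d x y) /\
  (forall x y, d x y = 0 <-> x = y) /\
  (forall x y, d x y = d y x) /\
  (forall x y z, d x z <= d x y + d y z).

Section Comp.
Context {X Y : Type} (dX : X -> X -> R) (dY : Y -> Y -> R) (f : X -> Y).

Definition xy_bounded (rX rY : R) (C : X -> Prop) : Prop :=
  forall x x', C x -> C x' -> dX x x' <= rX /\ dY (f x) (f x') <= rY.

Definition pair_bounded (rX rY : R) (x x' : X) : Prop :=
  xy_bounded rX rY (fun z => z = x \/ z = x').

(* x :: l is an (rX,rY)-chain in C (assuming C x) *)
Fixpoint chain_from (rX rY : R) (C : X -> Prop) (x : X) (l : list X) : Prop :=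
  match l with
  | nil => True
  | y :: l' => C y /\ pair_bounded rX rY x y /\ chain_from rX rY C y l'
  end.

Definition joined (rX rY : R) (C : X -> Prop) (x y : X) : Prop :=
  C x /\ exists l, chain_from rX rY C x l /\ last l x = y.

Definition is_component (rX rY : R) (C K : X -> Prop) : Prop :=
  (forall x, K x -> C x) /\
  (forall x y, K x -> K y -> joined rX rY C x y) /\
  (forall K' : X -> Prop,
      (forall x, K x -> K' x) -> (forall x, K' x -> C x) ->
      (forall x y, K' x -> K' y -> joined rX rY C x y) ->
      forall x, K' x -> K x).
End Comp.

(* Main.v *)
Require Import Defs.
From Stdlib Require Import Reals Lra List Relations.
Open Scope R_scope.

Section H.
Context {X Y : Type} (dX : X -> X -> R) (dY : Y -> Y -> R) (f : X -> Y).
Hypothesis mX : is_metric dX.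
Hypothesis mY : is_metric dY.

Definition stp (C : X -> Prop) (r r' : R) (u v : X) : Prop :=
  C u /\ C v /\ dX u v <= r /\ dY (f u) (f v) <= r'.

Lemma dX0 u : dX u u = 0.
Proof. destruct mX as [_ [H _]]. apply H. reflexivity. Qed.
Lemma dY0 u : dY u u = 0.
Proof. destruct mY as [_ [H _]]. apply H. reflexivity. Qed.
Lemma dXs u v : dX u v = dX v u.
Proof. destruct mX as [_ [_ [H _]]]. apply H. Qed.
Lemma dYs u v : dY u v = dY v u.
Proof. destruct mY as [_ [_ [H _]]]. apply H. Qed.
Lemma dXt u v w : dX u w <= dX u v + dX v w.
Proof. destruct mX as [_ [_ [_ H]]]. apply H. Qed.
Lemma dYt u v w : dY u w <= dY u v + dY v w.
Proof. destruct mY as [_ [_ [_ H]]]. apply H. Qed.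

Lemma pb_to r r' u v : pair_bounded dX dY f r r' u v -> dX u v <= r /\ dY (f u) (f v) <= r'.
Proof. intro H. apply H; auto. Qed.

Lemma pb_from r r' u v : 0 <= r -> 0 <= r' -> dX u v <= r -> dY (f u) (f v) <= r' ->
  pair_bounded dX dY f r r' u v.
Proof.
  intros h1 h2 h3 h4 a b [-> | ->] [-> | ->];
  rewrite ?dX0, ?dY0; try (split; lra);
  rewrite dXs, dYs; split; lra.
Qed.

Lemma stp_sym C r r' u v : stp C r r' u v -> stp C r r' v u.
Proof. intros (?&?&?&?); repeat split; auto; [rewrite dXs|rewrite dYs]; auto. Qed.

Lemma rt_sym C r r' u v : clos_refl_trans X (stp C r r') u v -> clos_refl_trans X (stp C r r') v u.
Proof.
  induction 1.
  - apply rt_step, stp_sym; auto.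
  - apply rt_refl.
  - eapply rt_trans; eauto.
Qed.

Lemma rt_C C r r' u v : clos_refl_trans X (stp C r r') u v -> C u -> C v.
Proof. induction 1; auto. intros; apply H. Qed.

Lemma last_indep (l : list X) x a b : last (x :: l) a = last (x :: l) b.
Proof. revert x. induction l as [|y l IHl]; intros; simpl; auto. apply (IHl y). Qed.

Lemma joined_rt C r r' u v : joined dX dY f r r' C u v -> clos_refl_trans X (stp C r r') u v.
Proof.
  intros [Cu [l [Hl Hlast]]]. revert u Cu Hl Hlast. induction l as [|w l IH]; intros u Cu Hl Hlast.
  - simpl in Hlast. subst. apply rt_refl.
  - simpl in Hl. destruct Hl as (Cw & Hp & Hc). simpl in Hlast.
    apply pb_to in Hp. apply rt_trans with w.
    + apply rt_step. unfold stp. tauto.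
    + apply IH; auto. rewrite <- Hlast. clear. destruct l as [|x l]; auto.
      apply last_indep.
Qed.

Lemma rt_joined C r r' u v : 0 <= r -> 0 <= r' -> clos_refl_trans X (stp C r r') u v -> C u ->
  joined dX dY f r r' C u v.
Proof.
  intros hr hr' H Cu. split; auto. apply clos_rt_rt1n in H. induction H.
  - exists nil. simpl. auto.
  - destruct H as (_ & Cy & h1 & h2). destruct (IHclos_refl_trans_1n Cy) as [l [Hl Hlast]].
    exists (y :: l). simpl. split; [split; [auto| split; [apply pb_from; auto|auto]]|].
    rewrite <- Hlast. destruct l as [|w l]; auto. apply last_indep.
Qed.

Lemma comp_is C r r' c : 0 <= r -> 0 <= r' -> C c ->
  is_component dX dY f r r' C (fun y => clos_refl_trans X (stp C r r') c y).
Proof.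
  intros hr hr' Cc. split; [|split].
  - intros x H. eapply rt_C; eauto.
  - intros x y Hx Hy. apply rt_joined; auto.
    + eapply rt_trans; [apply rt_sym; exact Hx| exact Hy].
    + eapply rt_C; eauto.
  - intros K' HK HC Hj x Hx. apply joined_rt with (r := r) (r' := r').
    apply Hj; auto. apply HK. apply rt_refl.
Qed.

Lemma comp_bound C r r' RR RR' u v : 0 <= r -> 0 <= r' ->
  (forall K, is_component dX dY f r r' C K -> xy_bounded dX dY f RR RR' K) ->
  C u -> clos_refl_trans X (stp C r r') u v -> dX u v <= RR /\ dY (f u) (f v) <= RR'.
Proof.
  intros hr hr' HB Cu H. apply (HB _ (comp_is C r r' u hr hr' Cu)); auto. apply rt_refl.
Qed.

End H.

Theorem mainTheorem8 (X Y : Type) (dX : X -> X -> R) (dY : Y -> Y -> R)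
  (f : X -> Y) (A B : X -> Prop)
  (rAX rAY RAX RAY rBX rBY RBX RBY : R) :
  is_metric dX -> is_metric dY ->
  0 < rAX -> 0 < rAY -> 0 < RAX -> 0 < RAY ->
  0 < rBX -> 0 < rBY -> 0 < RBX -> 0 < RBY ->
  (forall K, is_component dX dY f rAX rAY A K -> xy_bounded dX dY f RAX RAY K) ->
  (forall K, is_component dX dY f rBX rBY B K -> xy_bounded dX dY f RBX RBY K) ->
  RBX + 2 * rBX < rAX -> RBY + 2 * rBY < rAY ->
  forall K, is_component dX dY f rBX rBY (fun x => A x \/ B x) K ->
    xy_bounded dX dY f (RAX + 2 * rAX) (RAY + 2 * rAY) K.
Proof.
  intros mX mY h1 h2 h3 h4 h5 h6 h7 h8 HA HB e1 e2 K [HKC [HKj _]] x x' Kx Kx'.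
  pose (rtB := clos_refl_trans X (stp dX dY f B rBX rBY)).
  pose (rtA := clos_refl_trans X (stp dX dY f A rAX rAY)).
  assert (bB : forall u v, B u -> rtB u v -> dX u v <= RBX /\ dY (f u) (f v) <= RBY).
  { intros u v Bu H. eapply comp_bound with (C := B); eauto; lra. }
  assert (bA : forall u v, A u -> rtA u v -> dX u v <= RAX /\ dY (f u) (f v) <= RAY).
  { intros u v Au H. eapply comp_bound with (C := A); eauto; lra. }
  assert (Hrt := joined_rt _ _ _ _ _ _ _ _ (HKj x x' Kx Kx')).
  apply clos_rt_rtn1 in Hrt.
  assert (Inv : (B x /\ rtB x x') \/
    exists a0 a, A a0 /\ rtA a0 a /\
      (x = a0 \/ exists b, B x /\ rtB x b /\ dX b a0 <= rBX /\ dY (f b) (f a0) <= rBY) /\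
      (x' = a \/ exists b, B b /\ dX a b <= rBX /\ dY (f a) (f b) <= rBY /\ rtB b x')).
  { clear Kx'. induction Hrt as [|z z' Hs Hr IH].
    - destruct (HKC x Kx) as [Ax|Bx].
      + right. exists x, x. repeat split; auto. apply rt_refl.
      + left. split; auto. apply rt_refl.
    - destruct Hs as (_ & Cz' & s1 & s2).
      destruct IH as [[Bx Hb] | (a0 & a & Aa0 & Hra & Hx & Hz)].
      + destruct Cz' as [Az'|Bz'].
        * right. exists z', z'. split; auto. split; [apply rt_refl|]. split; auto.
          right. exists z. repeat split; auto.
        * left. split; auto. eapply rt_trans; [exact Hb|]. apply rt_step.
          repeat split; auto. eapply rt_C; eauto.
      + assert (Aa : A a) by (eapply rt_C; eauto).
        destruct Cz' as [Az'|Bz'].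
        * right. exists a0, z'. split; auto. split; [|split; auto].
          eapply rt_trans; [exact Hra|]. apply rt_step. repeat split; auto.
          -- destruct Hz as [->|(b & Bb & q1 & q2 & Hbz)].
             ++ lra.
             ++ destruct (bB _ _ Bb Hbz) as [u1 u2].
                pose proof (dXt dX mX a b z). pose proof (dXt dX mX a z z'). lra.
          -- destruct Hz as [->|(b & Bb & q1 & q2 & Hbz)].
             ++ lra.
             ++ destruct (bB _ _ Bb Hbz) as [u1 u2].
                pose proof (dYt dY mY (f a) (f b) (f z)). pose proof (dYt dY mY (f a) (f z) (f z')). lra.
        * right. exists a0, a. repeat split; auto. right.
          destruct Hz as [->|(b & Bb & q1 & q2 & Hbz)].
          -- exists z'. repeat split; auto. apply rt_refl.
          -- exists b. repeat split; auto. eapply rt_trans; [exact Hbz|].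
             apply rt_step. repeat split; auto. eapply rt_C; eauto. }
  destruct Inv as [[Bx Hb] | (a0 & a & Aa0 & Hra & Hx & Hz)].
  - destruct (bB _ _ Bx Hb). split; lra.
  - destruct (bA _ _ Aa0 Hra) as [v1 v2].
    assert (L1 : dX x a0 <= RBX + rBX /\ dY (f x) (f a0) <= RBY + rBY).
    { destruct Hx as [->|(b & Bx & Hb & q1 & q2)].
      - rewrite (dX0 dX mX), (dY0 dY mY). lra.
      - destruct (bB _ _ Bx Hb). pose proof (dXt dX mX x b a0). pose proof (dYt dY mY (f x) (f b) (f a0)). lra. }
    assert (L2 : dX a x' <= RBX + rBX /\ dY (f a) (f x') <= RBY + rBY).
    { destruct Hz as [->|(b & Bb & q1 & q2 & Hb)].
      - rewrite (dX0 dX mX), (dY0 dY mY). lra.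
      - destruct (bB _ _ Bb Hb). pose proof (dXt dX mX a b x'). pose proof (dYt dY mY (f a) (f b) (f x')). lra. }
    pose proof (dXt dX mX x a0 a). pose proof (dXt dX mX x a x').
    pose proof (dYt dY mY (f x) (f a0) (f a)). pose proof (dYt dY mY (f x) (f a) (f x')).
    split; lra.
Qed.
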